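(* Consider a quantum data-syndrome code with $n$ qubits and $m$ measurement bits, set $N=2n+m$, and consider noise described by a set of channel supports $\Gamma\subseteq 2^{[N]}$ with channel distributions $(P_\gamma)_{\gamma\in\Gamma}$ and total error distribution $P$. Assume that for all $\gamma_1,\gamma_2\in\Gamma$ one has $\gamma_1\cup\gamma_2\in\Delta^{D}$, and assume $P_\gamma(0)>\tfrac12$ for all $\gamma\in\Gamma$. Then the total error distribution $P$ is identifiable from the syndrome statistics: if $(P'_\gamma)_{\gamma\in\Gamma}$ is any other family of channel distributions for the same $\Gamma$ with $P'_\gamma(0)>\tfrac12$ for all $\gamma$, whose total error distribution $P'$ induces the same distribution of syndromes as $P$, then $P'=P$.
   Context: Phase space representation: a Pauli operator on $n$ qubits (modulo phases) $X^{x_1}Z^{z_1}\otimes\cdots\otimes X^{x_n}Z^{z_n}$ is identified with $(x_1,\dots,x_n,z_1,\dots,z_n)\in\mathbb F_2^{2n}$. For $v=(x,z)\in\mathbb F_2^{2n}$ write $\overline v=(z,x)$ (swap of $X$- and $Z$-bits); two Pauli vectors $u,v$ commute iff $\overline u\cdot v=0$ (mod 2). A quantum data-syndrome code is given by pairwise commuting stabilizer generators $g^{(1)},\dots,g^{(l)}\in\mathbb F_2^{2n}$ (generating a stabilizer group not containing $-I$) and a classical code with generator matrix $G_C=[I_l\ A]\in\mathbb F_2^{l\times m}$, $A\in\mathbb F_2^{l\times(m-l)}$; for $i\in[m]$ let $f^{(i)}=\sum_{j=1}^l (G_C)_{j,i}\,g^{(j)}\in\mathbb F_2^{2n}$ (so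 $f^{(i)}=g^{(i)}$ for $i\le l$). Errors are vectors $e=(e_d,e_m)\in\mathbb F_2^{2n}\times\mathbb F_2^m=\mathbb F_2^N$, and the syndrome of $e$ is $\mathrm{syn}(e)\in\mathbb F_2^m$ with $\mathrm{syn}(e)_i=f^{(i)}\cdot\overline{e_d}+(e_m)_i$ (mod 2). Vectors in $\mathbb F_2^N$ are identified with their support sets in $[N]$. A noise model consists of a set $\Gamma\subseteq 2^{[N]}$ and, for each $\gamma\in\Gamma$, a probability distribution $P_\gamma$ on $\mathbb F_2^N$ with $P_\gamma(e)=0$ unless $\mathrm{supp}(e)\subseteq\gamma$; the total error distribution $P$ is the distribution of $\sum_{\gamma\in\Gamma}e_\gamma$ (sum in $\mathbb F_2^N$) where the $e_\gamma\sim P_\gamma$ are independent (the Boolean convolution of the $P_\gamma$). The syndrome statistics is the distribution of $\mathrm{syn}(e)$ for $e\sim P$. Define $\Delta^{D}=\{\gamma\subseteq[N]: \mathrm{syn}(e)\neq 0 \text{ for all nonzero } e\in\mathbb F_2^N \text{ with } \mathrm{supp}(e)\subseteq\gamma\}$. *)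

(* Defs.v *)
From HB Require Import structures.
From mathcomp Require Import all_boot all_order all_algebra.
From mathcomp Require Import reals.
Set Implicit Arguments. Unset Strict Implicit. Unset Printing Implicit Defensive.
Import Order.TTheory GRing.Theory Num.Theory.
Local Open Scope ring_scope.

(* Phase-space vectors of n qubits: (x_1..x_n, z_1..z_n) in F_2^(n+n). *)
Definition pbar (n : nat) (v : 'rV['F_2]_(n + n)) : 'rV['F_2]_(n + n) :=
  row_mx (rsubmx v) (lsubmx v).

Definition pairwise_commuting (n l : nat) (g : 'M['F_2]_(l, n + n)) : Prop :=
  forall i j : 'I_l, pbar (row i g) *m (row j g)^T = 0.

(* Code with generator matrix G_C = [I_l A], m = l + k measurement bits.
   f^(i) = sum_j (G_C)_{j,i} g^(j) : rows of G_C^T *m g. *)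
Definition GC (l k : nat) (A : 'M['F_2]_(l, k)) : 'M['F_2]_(l, l + k) :=
  row_mx 1%:M A.

Definition fmat (n l k : nat) (g : 'M['F_2]_(l, n + n)) (A : 'M['F_2]_(l, k))
  : 'M['F_2]_(l + k, n + n) := (GC A)^T *m g.

(* Errors e = (e_d, e_m) in F_2^N, N = (n+n) + (l+k). *)
Notation errT n l k := 'rV['F_2]_(n + n + (l + k)).

Definition syn (n l k : nat) (g : 'M['F_2]_(l, n + n)) (A : 'M['F_2]_(l, k))
  (e : errT n l k) : 'rV['F_2]_(l + k) :=
  pbar (lsubmx e) *m (fmat g A)^T + rsubmx e.

Definition supp (N : nat) (e : 'rV['F_2]_N) : {set 'I_N} :=
  [set i | e 0 i != 0].

Definition DeltaD (n l k : nat) (g : 'M['F_2]_(l, n + n)) (A : 'M['F_2]_(l, k))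
  : {set {set 'I_(n + n + (l + k))}} :=
  [set gam : {set _} | [forall e : errT n l k,
      ((e != 0) && (supp e \subset gam)) ==> (syn g A e != 0)]].

Definition channel_dist (R : realType) (N : nat) (gam : {set 'I_N})
  (p : {ffun 'rV['F_2]_N -> R}) : Prop :=
  [/\ forall e, 0 <= p e, \sum_e p e = 1
    & forall e, p e != 0 -> supp e \subset gam].

(* Boolean convolution (distribution of the sum of independent variables). *)
Definition bconv (R : realType) (N : nat) (p q : {ffun 'rV['F_2]_N -> R})
  : {ffun 'rV['F_2]_N -> R} :=
  [ffun e => \sum_a p a * q (e - a)].

Definition delta0 (R : realType) (N : nat) : {ffun 'rV['F_2]_N -> R} :=
  [ffun e => if e == 0 then 1 else 0].

Definition total_dist (R : realType) (N : nat) (Gam : {set {set 'I_N}})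
  (P : {set 'I_N} -> {ffun 'rV['F_2]_N -> R}) : {ffun 'rV['F_2]_N -> R} :=
  \big[@bconv R N/delta0 R N]_(gam in Gam) P gam.

Definition syndrome_stats (R : realType) (n l k : nat) (g : 'M['F_2]_(l, n + n))
  (A : 'M['F_2]_(l, k)) (P : {ffun errT n l k -> R}) : {ffun 'rV['F_2]_(l + k) -> R} :=
  [ffun s => \sum_(e | syn g A e == s) P e].

(* Main.v *)
Require Import Defs.
From HB Require Import structures.
From mathcomp Require Import all_boot all_order all_algebra.
From mathcomp Require Import reals.
From mathcomp Require Import exp.
Import Order.TTheory GRing.Theory Num.Theory.
Local Open Scope ring_scope.

Lemma F2_cases (x : 'F_2) : x = 0 \/ x = 1.
Proof. case: x => [[|[|//]]] ? /=; [left|right]; exact: val_inj. Qed.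

Lemma F2_11 : (1 + 1 : 'F_2) = 0. Proof. exact: val_inj. Qed.
Lemma F2_N1 : (- 1 : 'F_2) = 1. Proof. exact: val_inj. Qed.
Lemma F2_10 : (1 : 'F_2) != 0. Proof. by []. Qed.

Definition dot {N} (u e : 'rV['F_2]_N) : 'F_2 := (u *m e^T) 0 0.
Definition chi (R : realType) {N} (u e : 'rV['F_2]_N) : R := if dot u e == 0 then 1 else -1.
Definition hat {R : realType} {N} (p : 'rV['F_2]_N -> R) (u : 'rV['F_2]_N) : R :=
  \sum_x p x * chi R u x.

Section Fourier.
Context {R : realType} {N : nat}.
Implicit Types u e a b : 'rV['F_2]_N.

Lemma dotE u e : dot u e = \sum_j u 0 j * e 0 j.
Proof. by rewrite /dot mxE; apply: eq_bigr => j _; rewrite mxE. Qed.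

Lemma dotC u e : dot u e = dot e u.
Proof. by rewrite !dotE; apply: eq_bigr => j _; rewrite mulrC. Qed.

Lemma dotDr u a b : dot u (a + b) = dot u a + dot u b.
Proof. by rewrite !dotE -big_split; apply: eq_bigr => j _; rewrite mxE mulrDr. Qed.

Lemma dotNr u a : dot u (- a) = - dot u a.
Proof. by rewrite !dotE -sumrN; apply: eq_bigr => j _; rewrite mxE mulrN. Qed.

Lemma dotZr u c a : dot u (c *: a) = c * dot u a.
Proof. by rewrite !dotE mulr_sumr; apply: eq_bigr => j _; rewrite mxE mulrCA. Qed.

Lemma dot0r u : dot u 0 = 0.
Proof. by rewrite dotE big1 // => j _; rewrite mxE mulr0. Qed.

Lemma dot_delta i e : dot (delta_mx 0 i) e = e 0 i.
Proof.
rewrite dotE (bigD1 i) //= big1 ?addr0; first by rewrite mxE !eqxx mul1r.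
by move=> j ji; rewrite mxE (negbTE ji) andbF mul0r.
Qed.

Lemma chiD u a b : chi R u (a + b) = chi R u a * chi R u b.
Proof.
rewrite /chi dotDr; case: (F2_cases (dot u a)) => ->; case: (F2_cases (dot u b)) => ->;
  rewrite ?addr0 ?add0r ?F2_11 ?eqxx //= ?mulr1 ?mul1r ?mulrNN ?mulr1 //.
Qed.

Lemma chiN u a : chi R u (- a) = chi R u a.
Proof. by rewrite /chi dotNr oppr_eq0. Qed.

Lemma chi0 u : chi R u 0 = 1.
Proof. by rewrite /chi dot0r eqxx. Qed.

Lemma chiC u e : chi R u e = chi R e u.
Proof. by rewrite /chi dotC. Qed.

Lemma chiDl u v a : chi R (u + v) a = chi R u a * chi R v a.
Proof. by rewrite chiC chiD !(chiC a). Qed.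

Lemma chi_pm u e : chi R u e = 1 \/ chi R u e = -1.
Proof. rewrite /chi; case: ifP; by [left|right]. Qed.

Lemma chi_delta i e : e 0 i != 0 -> chi R (delta_mx 0 i) e = -1.
Proof. by rewrite /chi dot_delta => /negbTE ->. Qed.

Lemma neq0_coord {e} : e != 0 -> exists i, e 0 i != 0.
Proof.
move=> e0; apply/existsP; apply: contraR e0 => /existsPn H.
by apply/eqP/rowP => i; rewrite mxE; apply/eqP; move: (H i); rewrite negbK.
Qed.

Definition cardT := (#|{: 'rV['F_2]_N}|%:R : R).

Lemma cardT_neq0 : cardT != 0.
Proof. by rewrite /cardT pnatr_eq0 -lt0n; apply/card_gt0P; exists 0. Qed.

Lemma sum_chi e : \sum_u chi R u e = if e == 0 then cardT else 0.
Proof.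
case: eqP => [->|/eqP e0].
  by rewrite (eq_bigr (fun _ => 1)) => [|u _]; rewrite ?chi0 // sumr_const.
have [i ei] := neq0_coord e0.
set S := \sum_u _.
have : S = - S.
  rewrite {1}/S (reindex_inj (addrI (delta_mx 0 i))) /= -sumrN.
  by apply: eq_bigr => u _; rewrite chiDl chi_delta // mulN1r.
clearbody S => H; have : S *+ 2 == 0 by rewrite mulr2n {1}H addNr.
by rewrite mulrn_eq0 /= => /eqP.
Qed.

Lemma chi_sub u b a : chi R u b * chi R u a = chi R u (b - a).
Proof. by rewrite chiD chiN. Qed.

Lemma chi_mul_sub b x u : chi R b x * chi R u b = chi R b (x - u).
Proof. by rewrite chiD chiN (chiC u). Qed.

Lemma inversion (p : 'rV['F_2]_N -> R) u :
  \sum_b hat p b * chi R u b = cardT * p u.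
Proof.
under eq_bigr => b _ do rewrite /hat mulr_suml.
rewrite exchange_big /=.
transitivity (\sum_x p x * (if x - u == 0 then cardT else 0)).
  apply: eq_bigr => x _; rewrite -sum_chi mulr_sumr.
  by apply: eq_bigr => b _; rewrite -mulrA chi_mul_sub.
rewrite (bigD1 u) //= subrr eqxx big1 => [|x xu]; first by rewrite addr0 mulrC.
by rewrite subr_eq0 (negbTE xu) mulr0.
Qed.

Lemma hat_inj (p q : 'rV['F_2]_N -> R) :
  (forall u, hat p u = hat q u) -> forall x, p x = q x.
Proof.
move=> H x; apply: (mulfI cardT_neq0); rewrite -!inversion.
by apply: eq_bigr => b _; rewrite H.
Qed.

End Fourier.

Section Main.
Variable R : realType.
Variables N m : nat.
Variable L : 'rV['F_2]_N -> 'rV['F_2]_m.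
Variable w : 'rV['F_2]_m -> 'rV['F_2]_N.
Hypothesis hw : forall t e, chi R t (L e) = chi R (w t) e.
Hypothesis L0 : L 0 = 0.
Variable Gam : {set {set 'I_N}}.
Hypothesis hD : forall g1 g2, g1 \in Gam -> g2 \in Gam ->
  forall e, supp e \subset g1 :|: g2 -> L e = 0 -> e = 0.
Variable f : {set 'I_N} -> 'rV['F_2]_N -> R.
Hypothesis hloc : forall g, g \in Gam -> forall u u' : 'rV['F_2]_N,
  (forall i, i \in g -> u 0 i = u' 0 i) -> f g u = f g u'.
Hypothesis hV : forall t, \sum_(g in Gam) f g (w t) = 0.

Lemma hat_loc g a : g \in Gam -> hat (f g) a != 0 -> supp a \subset g.
Proof.
move=> gG; apply: contraR => /subsetPn [i ia ig].
rewrite inE in ia.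
set S := hat _ _.
have : S = - S.
  rewrite {1}/S /hat (reindex_inj (addrI (delta_mx 0 i))) /= -sumrN.
  apply: eq_bigr => u _; rewrite chiD (chiC a (delta_mx 0 i)) chi_delta // mulN1r mulrN.
  congr (- (_ * _)); apply: hloc => // j jg.
  rewrite !mxE /=; have -> : (j == i) = false.
    by apply/negbTE; apply: contraNneq ig => <-.
  by rewrite add0r.
clearbody S => H; have : S *+ 2 == 0 by rewrite mulr2n {1}H addNr.
by rewrite mulrn_eq0 /=.
Qed.

Definition FF u := \sum_(g in Gam) f g u.

Lemma hatF a : hat FF a = \sum_(g in Gam) hat (f g) a.
Proof.
rewrite /hat /FF; under eq_bigr => u _ do rewrite mulr_suml.
by rewrite exchange_big.
Qed.

Lemma hatF_supp a : hat FF a != 0 -> exists2 g, g \in Gam & supp a \subset g.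
Proof.
rewrite hatF => H.
case: (boolP [exists g in Gam, hat (f g) a != 0]).
  by case/exists_inP => g gG /(@hat_loc g a gG) ?; exists g.
move/exists_inPn => H2; case/eqP: H; apply: big1 => g gG.
by apply/eqP; move: (H2 g gG); rewrite negbK.
Qed.

Lemma supp_sub (a b : 'rV['F_2]_N) : supp (b - a) \subset supp b :|: supp a.
Proof.
apply/subsetP => i; rewrite !inE mxE; apply: contraR.
by rewrite negb_or !negbK mxE => /andP [/eqP -> /eqP ->]; rewrite oppr0 addr0.
Qed.

Lemma hatF0 a : hat FF a = 0.
Proof.
apply/eqP; case: (boolP (hat FF a == 0)) => // Ha.
have [g1 g1G sa] := hatF_supp _ Ha.
have cm := @cardT_neq0 R m.
have key : \sum_(t : 'rV['F_2]_m) @cardT R N * FF (w t) * chi R (w t) a = 0.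
  by apply: big1 => t _; rewrite /FF hV mulr0 mul0r.
have : \sum_(t : 'rV['F_2]_m) @cardT R N * FF (w t) * chi R (w t) a
        = hat FF a * @cardT R m.
  transitivity (\sum_(t : 'rV['F_2]_m) \sum_b hat FF b * chi R (w t) (b - a)).
    apply: eq_bigr => t _; rewrite -inversion mulr_suml.
    by apply: eq_bigr => b _; rewrite -mulrA chi_sub.
  rewrite exchange_big /=.
  transitivity (\sum_b hat FF b * (if L (b - a) == 0 then @cardT R m else 0)).
    apply: eq_bigr => b _; rewrite -sum_chi mulr_sumr.
    by apply: eq_bigr => t _; rewrite hw.
  rewrite (bigD1 a) //= subrr L0 eqxx big1 => [|b ba]; first by rewrite addr0.
  case: (boolP (hat FF b == 0)) => [/eqP -> |Hb]; first by rewrite mul0r.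
  have [g2 g2G sb] := hatF_supp _ Hb.
  case: eqP => [Lba|]; last by rewrite mulr0.
  suff: b - a = 0 by move/eqP; rewrite subr_eq0 (negbTE ba).
  apply: (hD _ _ g2G g1G _ _ Lba).
  have h1 := supp_sub a b; have h2 := setUSS sb sa.
  exact: (subset_trans h1 h2).
move=> H; move: key; rewrite H => /eqP; rewrite mulf_eq0 (negbTE cm) orbF.
by move/eqP => H2; rewrite H2 eqxx in Ha.
Qed.

Lemma FF0 u : FF u = 0.
Proof.
apply: (mulfI (@cardT_neq0 R N)); rewrite mulr0 -inversion.
by apply: big1 => b _; rewrite hatF0 mul0r.
Qed.

End Main.

Section Dist.
Context {R : realType} {N : nat}.
Implicit Types p q : {ffun 'rV['F_2]_N -> R}.

Lemma hat_bconv p q u : hat (bconv p q) u = hat p u * hat q u.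
Proof.
rewrite /hat /bconv; under eq_bigr => e _ do rewrite ffunE mulr_suml.
rewrite exchange_big /= mulr_suml; apply: eq_bigr => a _.
rewrite (reindex_inj (addIr a)) /= mulr_sumr; apply: eq_bigr => x _.
by rewrite addrK chiD [chi R u x * _]mulrC mulrACA.
Qed.

Lemma hat_delta0 u : hat (delta0 R N) u = 1.
Proof.
rewrite /hat (bigD1 0) //= big1 => [|e e0]; first by rewrite ffunE eqxx mul1r chi0 addr0.
by rewrite ffunE (negbTE e0) mul0r.
Qed.

Lemma hat_total (Gam : {set {set 'I_N}}) (P : {set 'I_N} -> {ffun 'rV['F_2]_N -> R}) u :
  hat (total_dist Gam P) u = \prod_(g in Gam) hat (P g) u.
Proof.
rewrite /total_dist.
apply: (big_morph (fun p : {ffun 'rV['F_2]_N -> R} => hat p u)).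
  by move=> p q; rewrite hat_bconv.
exact: hat_delta0.
Qed.

Lemma hat_pos {g p u} : channel_dist g p -> 1 / 2 < p 0 -> 0 < hat p u.
Proof.
case=> p0 p1 _ ph.
have s1 : \sum_(e | e != 0) p e = 1 - p 0.
  by rewrite -p1 [in RHS](bigD1 0) //= addrAC subrr add0r.
have : - (1 - p 0) <= \sum_(e | e != 0) p e * chi R u e.
  rewrite -s1 -sumrN; apply: ler_sum => e _.
  case: (chi_pm (R:=R) u e) => ->; rewrite ?mulr1 ?mulrN1 //.
  by apply: le_trans (p0 e); rewrite oppr_le0.
move=> H; rewrite /hat (bigD1 0) //= chi0 mulr1.
apply: (lt_le_trans _ (lerD (lexx (p 0)) H)).
rewrite opprB addrA -(mulr2n (p 0)) subr_gt0.
rewrite -(ltr_pM2r (x := 1/2)) ?divr_gt0 ?ltr01 ?ltr0n //.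
rewrite -[p 0 *+ 2]mulr_natr -mulrA !mul1r divff ?pnatr_eq0 // mulr1; by rewrite mul1r in ph.
Qed.

Lemma hat_locd {g p} {u u' : 'rV['F_2]_N} : channel_dist g p ->
  (forall i, i \in g -> u 0 i = u' 0 i) -> hat p u = hat p u'.
Proof.
case=> _ _ ps H; apply: eq_bigr => e _.
case: (boolP (p e == 0)) => [/eqP -> | /ps /subsetP se]; first by rewrite !mul0r.
congr (_ * _); rewrite /chi !dotE; congr (if _ == _ then _ else _).
apply: eq_bigr => j _; case: (boolP (j \in g)) => jg; first by rewrite H.
have : j \notin supp e by apply: contra jg; apply: se.
by rewrite inE negbK => /eqP ->; rewrite !mulr0.
Qed.

End Dist.

Lemma ln_prod (R : realType) (I : Type) (r : seq I) (P : pred I) (F : I -> R) :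
  (forall i, P i -> 0 < F i) ->
  ln (\prod_(i <- r | P i) F i) = \sum_(i <- r | P i) ln (F i).
Proof.
move=> Fp.
suff [] : 0 < \prod_(i <- r | P i) F i /\ ln (\prod_(i <- r | P i) F i) = \sum_(i <- r | P i) ln (F i) by [].
apply: (big_rec2 (fun y1 y2 => 0 < y1 /\ ln y1 = y2)); first by rewrite ln1.
move=> i y1 y2 Pi [y1p <-]; split; first by rewrite mulr_gt0 ?Fp.
by rewrite lnM // posrE ?Fp.
Qed.
Lemma synD {n l k} (g : 'M['F_2]_(l, n + n)) (A : 'M['F_2]_(l, k)) (a b : errT n l k) :
  syn g A (a + b) = syn g A a + syn g A b.
Proof.
rewrite /syn /pbar !linearD /= -add_row_mx mulmxDl.
by rewrite -!addrA; congr (_ + _); rewrite addrC -addrA; congr (_ + _); exact: addrC.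
Qed.
Lemma synZ {n l k} (g : 'M['F_2]_(l, n + n)) (A : 'M['F_2]_(l, k)) c (a : errT n l k) :
  syn g A (c *: a) = c *: syn g A a.
Proof.
by rewrite /syn /pbar !linearZ /= -scale_row_mx -scalemxAl scalerDr.
Qed.

Lemma syn0 {n l k} (g : 'M['F_2]_(l, n + n)) (A : 'M['F_2]_(l, k)) :
  syn g A 0 = 0.
Proof.
by apply: (@addrI _ (syn g A 0)); rewrite addr0 -synD addr0.
Qed.

Definition wmap {n l k} (g : 'M['F_2]_(l, n + n)) (A : 'M['F_2]_(l, k))
  (t : 'rV['F_2]_(l + k)) : errT n l k :=
  \row_i dot t (syn g A (delta_mx 0 i)).

Lemma dot_syn {n l k} (g : 'M['F_2]_(l, n + n)) (A : 'M['F_2]_(l, k)) t e :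
  dot t (syn g A e) = dot (wmap g A t) e.
Proof.
rewrite {1}(row_sum_delta e).
rewrite (big_morph (syn g A) (synD g A) (syn0 g A)).
rewrite (big_morph (dot t) (dotDr t) (dot0r t)) dotE.
by apply: eq_bigr => j _; rewrite synZ dotZr mxE mulrC.
Qed.

Lemma stats_hat {R : realType} {n l k} (g : 'M['F_2]_(l, n + n)) (A : 'M['F_2]_(l, k))
  (p : {ffun errT n l k -> R}) t :
  \sum_s syndrome_stats g A p s * chi R t s = hat p (wmap g A t).
Proof.
rewrite /hat /syndrome_stats.
under eq_bigr => s _ do rewrite ffunE mulr_suml big_mkcond /=.
rewrite exchange_big /=; apply: eq_bigr => e _.
rewrite (bigD1 (syn g A e)) //= eqxx big1 => [|s se]; last first.
  by rewrite eq_sym (negbTE se).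
by rewrite addr0 /chi dot_syn.
Qed.

Theorem theorem10 (R : realType) (n l k : nat)
  (g : 'M['F_2]_(l, n + n)) (A : 'M['F_2]_(l, k))
  (Gam : {set {set 'I_(n + n + (l + k))}})
  (P P' : {set 'I_(n + n + (l + k))} -> {ffun 'rV['F_2]_(n + n + (l + k)) -> R}) :
  pairwise_commuting g ->
  (forall gam, gam \in Gam -> channel_dist gam (P gam)) ->
  (forall gam1 gam2, gam1 \in Gam -> gam2 \in Gam -> gam1 :|: gam2 \in DeltaD g A) ->
  (forall gam, gam \in Gam -> 1 / 2 < P gam 0) ->
  (forall gam, gam \in Gam -> channel_dist gam (P' gam)) ->
  (forall gam, gam \in Gam -> 1 / 2 < P' gam 0) ->
  syndrome_stats g A (total_dist Gam P') = syndrome_stats g A (total_dist Gam P) ->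
  total_dist Gam P' = total_dist Gam P.
Proof.
move=> _ chP hDel hP chP' hP' hst.
have eqV t : hat (total_dist Gam P') (wmap g A t) = hat (total_dist Gam P) (wmap g A t).
  by rewrite -!stats_hat hst.
have hw t e : chi R t (syn g A e) = chi R (wmap g A t) e by rewrite /chi dot_syn.
have hD g1 g2 : g1 \in Gam -> g2 \in Gam ->
    forall e, supp e \subset g1 :|: g2 -> syn g A e = 0 -> e = 0.
  move=> g1G g2G e se s0; move: (hDel _ _ g1G g2G); rewrite inE => /forallP /(_ e).
  rewrite se andbT s0 eqxx implybF negbK => /eqP //.
pose f gam u := ln (hat (P' gam) u) - ln (hat (P gam) u).
have hloc gam : gam \in Gam -> forall u u' : 'rV['F_2]_(n + n + (l + k)),
    (forall i, i \in gam -> u 0 i = u' 0 i) -> f gam u = f gam u'.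
  move=> gG u u' H; rewrite /f (hat_locd (chP' _ gG) H) (hat_locd (chP _ gG) H) //.
have sumf u : \sum_(gam in Gam) f gam u
    = ln (hat (total_dist Gam P') u) - ln (hat (total_dist Gam P) u).
  rewrite /f sumrB !hat_total !ln_prod // => gam gG.
    exact: hat_pos (chP _ gG) (hP _ gG).
  exact: hat_pos (chP' _ gG) (hP' _ gG).
have hV t : \sum_(gam in Gam) f gam (wmap g A t) = 0.
  by rewrite sumf eqV subrr.
have F0 u := @FF0 R _ _ _ _ hw (syn0 g A) _ hD _ hloc hV u.
apply/ffunP => x; apply: hat_inj => u.
have := F0 u; rewrite /FF sumf => /eqP; rewrite subr_eq0 => /eqP.
apply: ln_inj; rewrite posrE !hat_total; apply: prodr_gt0 => gam gG.
  exact: hat_pos (chP' _ gG) (hP' _ gG).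
exact: hat_pos (chP _ gG) (hP _ gG).
Qed.
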